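(* Let $\mathbf y_b\in\mathbb R^{n_b}$, $\mathbf X_b\in\mathbb R^{n_b\times m}$, $\mathbf V_b\in\mathbb R^{n_b\times n_b}$ symmetric positive definite, and $\mathbf A\in\mathbb R^{n\times n_b}$ of full column rank. Set $\mathbf y=\mathbf A\mathbf y_b$, $\mathbf X=\mathbf A\mathbf X_b$, $\mathbf V=\mathbf A\mathbf V_b\mathbf A^\top$, and define the projection-induced mappings $$\mathbf P_b=(\mathbf X_b^\top\mathbf V_b^{-1}\mathbf X_b)^{+}\mathbf X_b^\top\mathbf V_b^{-1}\in\mathbb R^{m\times n_b},\qquad \mathbf P=(\mathbf X^\top\mathbf V^{+}\mathbf X)^{+}\mathbf X^\top\mathbf V^{+}\in\mathbb R^{m\times n}.$$ Then $\mathbf P\mathbf A=\mathbf P_b$. In particular, for every row index $i$, writing $\mathbf p_i^\top$ and $\mathbf p_{b,i}^\top$ for the $i$-th rows of $\mathbf P$ and $\mathbf P_b$, one has $\mathbf p_{b,i}^\top=\mathbf p_i^\top\mathbf A$ and $\mathbf p_i^\top\mathbf y=\mathbf p_{b,i}^\top\mathbf y_b$. Moreover, if $\mathbf y_b=(\mathbf y_{b,1}^\top,\dots,\mathbf y_{b,K}^\top)^\top$ is partitioned into $K$ study blocks, $\mathbf V_b$ is block diagonal with respect to this partition, and $\mathbf A=\operatorname{diag}(\mathbf A_1,\dots,\mathbf A_K)$ is block diagonal with each $\mathbf A_k$ of full column rank, then for each study $k$ the corresponding blocks satisfy $\mathbf p_{b,i,k}^\top=\mathbf p_{i,k}^\top\mathbf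 A_k$ and $\mathbf p_{i,k}^\top\mathbf A_k\mathbf y_{b,k}=\mathbf p_{b,i,k}^\top\mathbf y_{b,k}$, i.e. each study-level contribution to the estimator is the same in both representations.
   Context: Notation as in network meta-analysis with observed contrasts $\mathbf y$, design matrix $\mathbf X$ and covariance $\mathbf V$; the GLS (network meta-analysis) estimator is $\hat{\boldsymbol\theta}=\mathbf P\mathbf y$ with $\mathbf P=(\mathbf X^\top\mathbf V^{+}\mathbf X)^{+}\mathbf X^\top\mathbf V^{+}$, where $^{+}$ denotes the Moore–Penrose pseudoinverse. The study-level contribution of study $k$ to the $i$-th estimated contrast is $\mathbf p_{i,k}^\top\mathbf y_k$, where $\mathbf p_{i,k}$ and $\mathbf y_k$ are the blocks of the $i$-th row of $\mathbf P$ and of $\mathbf y$ belonging to study $k$. The reduced representation $(\mathbf y_b,\mathbf X_b,\mathbf V_b)$ and the full representation $(\mathbf y,\mathbf X,\mathbf V)$ are related by the linear embedding $\mathbf A$ as stated. *)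

(* Defs.v *)
From HB Require Import structures.
From mathcomp Require Import all_boot all_order all_algebra.
From Stdlib Require Import ClassicalEpsilon.
Set Implicit Arguments. Unset Strict Implicit. Unset Printing Implicit Defensive.
Import Order.TTheory GRing.Theory Num.Theory.
Local Open Scope ring_scope.

Definition is_MPinv (R : realFieldType) (p q : nat)
  (A : 'M[R]_(p, q)) (B : 'M[R]_(q, p)) : Prop :=
  [/\ A *m B *m A = A, B *m A *m B = B,
      (A *m B)^T = A *m B & (B *m A)^T = B *m A].

(* The Moore-Penrose pseudoinverse A^+ (chosen by Hilbert's epsilon among the
   matrices satisfying the Penrose conditions; it exists and is unique over a
   real field). *)
Definition MPinv (R : realFieldType) (p q : nat) (A : 'M[R]_(p, q)) : 'M[R]_(q, p) :=
  epsilon (inhabits 0) (fun B => is_MPinv A B).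

Definition sym_posdef (R : realFieldType) (n : nat) (V : 'M[R]_n) : Prop :=
  V^T = V /\ forall x : 'cV[R]_n, x != 0 -> 0 < (x^T *m V *m x) 0 0.

Definition Pb_map (R : realFieldType) (nb m : nat)
  (Xb : 'M[R]_(nb, m)) (Vb : 'M[R]_nb) : 'M[R]_(m, nb) :=
  MPinv (Xb^T *m invmx Vb *m Xb) *m Xb^T *m invmx Vb.

Definition P_map (R : realFieldType) (n m : nat)
  (X : 'M[R]_(n, m)) (V : 'M[R]_n) : 'M[R]_(m, n) :=
  MPinv (X^T *m MPinv V *m X) *m X^T *m MPinv V.

Definition bdiag (R : realFieldType) (K : nat) (p_ q_ : 'I_K -> nat)
  (A_ : forall k, 'M[R]_(p_ k, q_ k)) : 'M[R]_(\sum_k p_ k, \sum_k q_ k) :=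
  mxblock (fun j k => if j == k then conform_mx 0 (A_ j) else 0).

(* Main.v *)
Require Import Defs.
From HB Require Import structures.
From mathcomp Require Import all_boot all_order all_algebra.
From Stdlib Require Import ClassicalEpsilon.
Set Implicit Arguments. Unset Strict Implicit. Unset Printing Implicit Defensive.
Import Order.TTheory GRing.Theory Num.Theory.
Local Open Scope ring_scope.

Section H.
Variable R : realFieldType.

Lemma MP_uniq p q (A : 'M[R]_(p, q)) B C : is_MPinv A B -> is_MPinv A C -> B = C.
Proof.
case=> HB1 HB2 HB3 HB4 [HC1 HC2 HC3 HC4].
have e1 : (A *m B)^T = (A *m B)^T *m (A *m C)^T.
  by rewrite -{1}HC1 !trmx_mul !mulmxA.
have e2 : (C *m A)^T = (B *m A)^T *m (C *m A)^T.
  by rewrite -{1}HB1 !trmx_mul !mulmxA.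
have -> : B = B *m A *m C.
  by rewrite -{1}HB2 -mulmxA -HB3 e1 HB3 HC3 !mulmxA HB2.
symmetry.
transitivity ((C *m A)^T *m C); first by rewrite HC4 HC2.
by rewrite e2 HB4 HC4 -(mulmxA (B *m A)) HC2.
Qed.

Lemma MPinvE p q (A : 'M[R]_(p, q)) W : is_MPinv A W -> MPinv A = W.
Proof.
move=> HW; apply: (@MP_uniq _ _ A) => //; rewrite /MPinv.
by apply: epsilon_spec; exists W.
Qed.

Lemma inj_unit n (M : 'M[R]_n) : (forall u : 'rV_n, u *m M = 0 -> u = 0) -> M \in unitmx.
Proof.
move=> H; rewrite -row_free_unit -kermx_eq0; apply/rowV0P => v /sub_kermxP.
exact: H.
Qed.

Lemma sumsq_eq0 n (v : 'cV[R]_n) : (v^T *m v) 0 0 = 0 -> v = 0.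
Proof.
rewrite mxE => H; apply/matrixP => i j; rewrite (ord1 j) mxE.
have pos : forall k : 'I_n, predT k -> 0 <= v^T 0 k * v k 0.
  by move=> k _; rewrite mxE -expr2 sqr_ge0.
have H2 := @psumr_eq0P R _ predT (fun k => v^T 0 k * v k 0) pos H i isT.
by move: H2; rewrite /= mxE -expr2 => H2; apply/eqP; rewrite -sqrf_eq0 H2.
Qed.

Lemma rank_inj n nb (A : 'M[R]_(n, nb)) : \rank A = nb -> forall x : 'cV_nb, A *m x = 0 -> x = 0.
Proof.
move=> hr x Ax; apply: trmx_inj; rewrite trmx0.
have rf : row_free A^T by rewrite /row_free mxrank_tr hr.
apply: (row_free_inj rf); rewrite mul0mx -trmx_mul Ax trmx0 //.
Qed.


Lemma posdef_unit n (Vb : 'M[R]_n) : sym_posdef Vb -> Vb \in unitmx.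
Proof.
case=> Vs Vp; apply: inj_unit => u Hu; apply/eqP; apply/negPn/negP => nz.
have nzx : u^T != 0 by rewrite trmx_eq0.
have := Vp _ nzx; rewrite trmxK Hu mul0mx mxE ltxx //.
Qed.

Lemma gram_unit n nb (A : 'M[R]_(n, nb)) : (forall x : 'cV_nb, A *m x = 0 -> x = 0) ->
  A^T *m A \in unitmx.
Proof.
move=> Ai; apply: inj_unit => u Hu; apply: trmx_inj; rewrite trmx0; apply: Ai.
apply: sumsq_eq0; rewrite trmx_mul trmxK mulmxA -(mulmxA u) Hu mul0mx mxE //.
Qed.

Lemma gen_main nb n m (Xb : 'M[R]_(nb, m)) (Vb : 'M[R]_nb) (A : 'M[R]_(n, nb)) :
  sym_posdef Vb -> (forall x : 'cV_nb, A *m x = 0 -> x = 0) ->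
  P_map (A *m Xb) (A *m Vb *m A^T) *m A = Pb_map Xb Vb.
Proof.
move=> Vpd Ai.
have Vu := posdef_unit Vpd.
have Gu := gram_unit Ai.
set G := A^T *m A in Gu.
set Gi := invmx G. set Vi := invmx Vb.
set L := A *m Gi.
have Gs : Gi^T = Gi by rewrite /Gi trmx_inv /G trmx_mul trmxK.
have Vs : Vi^T = Vi by rewrite /Vi trmx_inv (proj1 Vpd).
have hAL : forall k (M : 'M_(k, nb)), M *m A^T *m L = M.
  by move=> k M; rewrite /L -!mulmxA (mulmxA A^T) -/G mulmxV // mulmx1.
have hLA : forall k (M : 'M_(k, nb)), M *m L^T *m A = M.
  by move=> k M; rewrite /L trmx_mul Gs -!mulmxA mulVmx // mulmx1.
have hVV : forall k (M : 'M_(k, nb)), M *m Vb *m Vi = M.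
  by move=> k M; rewrite -mulmxA mulmxV // mulmx1.
have hVV' : forall k (M : 'M_(k, nb)), M *m Vi *m Vb = M.
  by move=> k M; rewrite -mulmxA mulVmx // mulmx1.
have hsym : L *m A^T = A *m L^T by rewrite /L trmx_mul Gs mulmxA.
clearbody L.
set W := L *m Vi *m L^T.
have VW : A *m Vb *m A^T *m W = A *m L^T.
  by rewrite /W !mulmxA hAL hVV.
have WV : W *m (A *m Vb *m A^T) = L *m A^T.
  by rewrite /W !mulmxA hLA hVV'.
have sym : (A *m L^T)^T = A *m L^T by rewrite trmx_mul trmxK hsym.
have MP : is_MPinv (A *m Vb *m A^T) W.
  split.
  - by rewrite VW !mulmxA hLA.
  - by rewrite WV /W !mulmxA hAL.
  - by rewrite VW sym.
  - by rewrite WV hsym sym.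
rewrite /P_map (MPinvE MP).
have -> : (A *m Xb)^T *m W *m (A *m Xb) = Xb^T *m Vi *m Xb.
  by rewrite trmx_mul /W !mulmxA hAL hLA.
by rewrite /Pb_map trmx_mul /W !mulmxA hAL hLA.
Qed.


Lemma bdiag_rmul K (p_ q_ : 'I_K -> nat) (A_ : forall k, 'M[R]_(p_ k, q_ k)) l
  (u : 'M[R]_(l, \sum_k p_ k)) k :
  submxrow (u *m bdiag A_) k = submxrow u k *m A_ k.
Proof.
rewrite /bdiag -{1}[u]submxrowK mul_mxrow_mxblock mxrowK (bigD1 k) //= eqxx conform_mx_id.
rewrite big1 ?addr0 // => j /negbTE ->; exact: mulmx0.
Qed.

Lemma bdiag_lmul K (p_ q_ : 'I_K -> nat) (A_ : forall k, 'M[R]_(p_ k, q_ k)) l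
  (x : 'M[R]_(\sum_k q_ k, l)) k :
  submxcol (bdiag A_ *m x) k = A_ k *m submxcol x k.
Proof.
rewrite /bdiag -{1}[x]submxcolK mul_mxblock_mxrow mxcolK (bigD1 k) //= eqxx conform_mx_id.
rewrite big1 ?addr0 // => j /negbTE; rewrite eq_sym => ->; exact: mul0mx.
Qed.

Lemma bdiag_inj K (p_ q_ : 'I_K -> nat) (A_ : forall k, 'M[R]_(p_ k, q_ k)) :
  (forall k, \rank (A_ k) = q_ k) ->
  forall x : 'cV_(\sum_k q_ k), bdiag A_ *m x = 0 -> x = 0.
Proof.
move=> hr x Ax; rewrite -[x]submxcolK -(mxcol0 _); apply: eq_mxcol => k.
apply: (rank_inj (hr k)); rewrite -bdiag_lmul Ax; exact: submxcol0.
Qed.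

End H.

Theorem mainTheorem2 (R : realFieldType) (m : nat) :
  (* general statement *)
  (forall (nb n : nat) (yb : 'cV[R]_nb) (Xb : 'M[R]_(nb, m)) (Vb : 'M[R]_nb)
          (A : 'M[R]_(n, nb)),
      sym_posdef Vb -> \rank A = nb ->
      let y := A *m yb in
      let X := A *m Xb in
      let V := A *m Vb *m A^T in
      let Pb := Pb_map Xb Vb in
      let P := P_map X V in
      P *m A = Pb /\
      (forall i : 'I_m,
          row i Pb = row i P *m A /\ row i P *m y = row i Pb *m yb)) /\
  (* study-level (block) statement *)
  (forall (K : nat) (nb_ n_ : 'I_K -> nat)
          (yb_ : forall k, 'cV[R]_(nb_ k)) (Xb : 'M[R]_(\sum_k nb_ k, m))
          (Vb_ : forall k, 'M[R]_(nb_ k)) (A_ : forall k, 'M[R]_(n_ k, nb_ k)),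
      let Vb := \mxdiag_k Vb_ k in
      let A := bdiag A_ in
      let yb := \mxcol_k yb_ k in
      sym_posdef Vb -> (forall k, \rank (A_ k) = nb_ k) ->
      let X := A *m Xb in
      let V := A *m Vb *m A^T in
      let Pb := Pb_map Xb Vb in
      let P := P_map X V in
      forall (i : 'I_m) (k : 'I_K),
        submxrow (row i Pb) k = submxrow (row i P) k *m A_ k /\
        submxrow (row i P) k *m A_ k *m yb_ k = submxrow (row i Pb) k *m yb_ k).
Proof.
split.
  move=> nb n yb Xb Vb A Vpd hr y X V Pb P.
  have HPA : P *m A = Pb by apply: gen_main => //; exact: rank_inj.
  split=> // i; split; first by rewrite -HPA row_mul.
  by rewrite /y mulmxA -row_mul HPA.
move=> K nb_ n_ yb_ Xb Vb_ A_ Vb A yb Vpd hr X V Pb P i k.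
have HPA : P *m A = Pb by apply: gen_main => //; exact: bdiag_inj.
have e : submxrow (row i Pb) k = submxrow (row i P) k *m A_ k.
  by rewrite -HPA row_mul bdiag_rmul.
by split=> //; rewrite e.
Qed.
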